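(* Let $g(x_1,\ldots,x_n)=\prod_{j\in\mathcal{J}}\phi_j(x_i:i\in\alpha_j)$ be a global function on a product of finite alphabets with nonnegative local functions, and run the support passing algorithm on its factor graph, initialized by $\lambda(\mu^1_{X\to\phi})=\lambda(\nu^1_{\phi\to X})=\mathcal{X}$ for every variable node $X$ and adjacent factor node $\phi$, where $\mathcal{X}$ is the alphabet of $X$. Then: (1) for all $k$, $\lambda(\mu^{k+1}_{X\to\phi})\subseteq\lambda(\mu^k_{X\to\phi})$ and $\lambda(\nu^{k+1}_{\phi\to X})\subseteq\lambda(\nu^k_{\phi\to X})$; hence after finitely many iterations the supports of all messages remain unchanged; (2) for every variable node $X$ (with value $x$), every adjacent factor node $\phi$ and every $k$, the support of the marginal $x\mapsto\sum_{\text{all variables other than } x}g(x_1,\ldots,x_n)$ is a subset of both $\lambda(\mu^k_{X\to\phi})$ and $\lambda(\nu^k_{\phi\to X})$.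
   Context: Factor graph: for $g=\prod_{j}\phi_j(x_i:i\in\alpha_j)$, the bipartite graph with variable nodes $X_1,\ldots,X_n$, factor nodes $\phi_j$, and an edge $(X_i,\phi_j)$ whenever $x_i\in\alpha_j$; $n(v)$ denotes the set of neighbours of a node $v$. For a function $h$, $\lambda(h)=\{x:h(x)\neq0\}$, and for $h(x,y)$ with $y$ fixed, $\lambda(h(x\mid y))=\{x:h(x,y)\neq0\}$. The support passing algorithm passes sets (supports) $\lambda(\mu^k_{X\to\phi})\subseteq\mathcal{X}$ from variable nodes to factor nodes and $\lambda(\nu^k_{\phi\to X})\subseteq\mathcal{X}$ from factor nodes to variable nodes, updated by $\lambda(\mu^{k+1}_{X\to\phi})=\bigcap_{\psi\in n(X)\setminus\{\phi\}}\lambda(\nu^k_{\psi\to X})$ (empty intersection $=\mathcal{X}$) and $\lambda(\nu^{k+1}_{\phi\to X})=\bigcup\lambda\big(\phi(x\mid x^*:X^*\in n(\phi)\setminus\{X\})\big)$, the union being over all assignments with $x^*\in\lambda(\mu^k_{X^*\to\phi})$ for each $X^*\in n(\phi)\setminus\{X\}$. *)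

(* Defs.v *)
From HB Require Import structures.
From mathcomp Require Import all_boot all_order all_algebra.
Set Implicit Arguments. Unset Strict Implicit. Unset Printing Implicit Defensive.
Import Order.TTheory GRing.Theory Num.Theory.
Local Open Scope ring_scope.

(* Factor graph setting:
   - V : finite type of variable indices (variables X_i, i : V),
   - A i : finite alphabet of variable X_i,
   - J : finite type of factor indices, alpha j : {set V} the scope of phi_j,
   - phi j : a local function; it is given as a function of a full
     configuration, together with the hypothesis (in the theorem) that it only
     depends on the coordinates in alpha j.
   The variable node X_i and factor node phi_j are adjacent iff i \in alpha j. *)

Section SupportPassing.

Variables (V : finType) (A : V -> finType) (J : finType).
Variable (alpha : J -> {set V}).

Definition config := {dffun forall i : V, A i}.

Variable (R : realDomainType).
Variable (phi : J -> config -> R).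

Definition glob (y : config) : R := \prod_(j : J) phi j y.

Definition marginal (i : V) (x : A i) : R :=
  \sum_(y : config | y i == x) glob y.

Definition marg_support (i : V) : {set A i} := [set x | marginal x != 0].

(* supports of messages: mu i j = lambda(mu_{X_i -> phi_j}),
                         nu j i = lambda(nu_{phi_j -> X_i}) *)
Record msgs := Msgs {
  mu : forall (i : V) (j : J), {set A i};
  nu : forall (j : J) (i : V), {set A i} }.

Definition msgs_init : msgs := Msgs (fun i _ => setT) (fun _ i => setT).

Definition msgs_step (m : msgs) : msgs :=
  Msgs
    (* intersection over psi in n(X_i) \ {phi_j}; empty intersection = setT *)
    (fun i j => \bigcap_(j' : J | (i \in alpha j') && (j' != j)) nu m j' i)
    (fun j i => [set x : A i | [exists y : config,
        [&& y i == x,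
            [forall i' : V, ((i' \in alpha j) && (i' != i)) ==> (y i' \in mu m i' j)]
          & phi j y != 0]]]).

(* support_msgs k = messages at iteration k (iterations numbered from 1;
   support_msgs 0 is an unused dummy equal to the initialization) *)
Fixpoint support_msgs (k : nat) : msgs :=
  match k with
  | 0 => msgs_init
  | 1 => msgs_init
  | k'.+1 => msgs_step (support_msgs k')
  end.

End SupportPassing.

(* Main.v *)
Require Import Defs.
From HB Require Import structures.
From mathcomp Require Import all_boot all_order all_algebra.
Import Order.TTheory GRing.Theory Num.Theory.
Set Implicit Arguments. Unset Strict Implicit.
Local Open Scope ring_scope.

Lemma step_mono (V : finType) (A : V -> finType) (J : finType)
    (alpha : J -> {set V}) (R : realDomainType)
    (phi : J -> config A -> R) (m m' : msgs A J) :
  (forall i j, mu m i j \subset mu m' i j) ->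
  (forall j i, nu m j i \subset nu m' j i) ->
  (forall i j, mu (msgs_step alpha phi m) i j \subset mu (msgs_step alpha phi m') i j) /\
  (forall j i, nu (msgs_step alpha phi m) j i \subset nu (msgs_step alpha phi m') j i).
Proof.
move=> Hmu Hnu; split.
- move=> i j /=; apply/bigcapsP => j' Hj'.
  exact: subset_trans (bigcap_inf j' Hj') (Hnu j' i).
- move=> j i /=; apply/subsetP => x; rewrite !inE => /existsP [y /and3P [Hy Hf Hp]].
  apply/existsP; exists y; rewrite Hy Hp andbT /=.
  apply/forallP => i'; apply/implyP => Hi'.
  move/forallP: Hf => /(_ i') /implyP /(_ Hi') H.
  exact: (subsetP (Hmu i' j)) _ H.
Qed.

Definition pot (V : finType) (A : V -> finType) (J : finType) (m : msgs A J) : nat :=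
  (\sum_(i : V) \sum_(j : J) #|mu m i j| + \sum_(j : J) \sum_(i : V) #|nu m j i|)%N.

Lemma pot_leqif (V : finType) (A : V -> finType) (J : finType) (m m' : msgs A J) :
  (forall i j, mu m i j \subset mu m' i j) ->
  (forall j i, nu m j i \subset nu m' j i) ->
  (pot m <= pot m' ?= iff
     [forall i, forall j, mu m i j == mu m' i j] &&
     [forall j, forall i, nu m j i == nu m' j i])%N.
Proof.
move=> Hmu Hnu; rewrite /pot; apply: leqif_add.
- apply: leqif_sum => i _; apply: leqif_sum => j _.
  exact: subset_leqif_cards.
- apply: leqif_sum => j _; apply: leqif_sum => i _.
  exact: subset_leqif_cards.
Qed.

Lemma glob_supp (V : finType) (A : V -> finType) (J : finType)
    (R : realDomainType) (phi : J -> config A -> R)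
    (phi_nonneg : forall (j : J) (y : config A), 0 <= phi j y) (y : config A) (i : V) :
  glob phi y != 0 -> y i \in marg_support phi i.
Proof.
move=> Hy; rewrite inE /marginal.
have g0 : forall z, 0 <= glob phi z by move=> z; apply: prodr_ge0 => j _.
have gp : 0 < glob phi y by rewrite lt_def Hy g0.
rewrite (bigD1 y) //=; apply: lt0r_neq0.
apply: (lt_le_trans gp); rewrite lerDl; apply: sumr_ge0 => z _; exact: g0.
Qed.

Lemma marg_ex (V : finType) (A : V -> finType) (J : finType)
    (R : realDomainType) (phi : J -> config A -> R) (i : V) (x : A i) :
  x \in marg_support phi i -> exists y : config A, y i = x /\ glob phi y != 0.
Proof.
rewrite inE /marginal => H.
suff /existsP [y /andP [/eqP Hy Hg]] : [exists y : config A, (y i == x) && (glob phi y != 0)].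
  by exists y.
apply: contraNT H.
rewrite negb_exists => /forallP Hn; apply/eqP; apply: big1 => y /eqP Hy.
by move: (Hn y); rewrite Hy eqxx /= negbK => /eqP.
Qed.

Theorem mainTheorem2 (V : finType) (A : V -> finType) (J : finType)
    (alpha : J -> {set V}) (R : realDomainType)
    (phi : J -> config A -> R)
    (phi_local : forall (j : J) (y y' : config A),
        (forall i, i \in alpha j -> y i = y' i) -> phi j y = phi j y')
    (phi_nonneg : forall (j : J) (y : config A), 0 <= phi j y) :
  let m := support_msgs alpha phi in
  (* (1) monotonicity of the supports *)
  ((forall (k : nat) (i : V) (j : J), (0 < k)%N -> i \in alpha j ->
      mu (m k.+1) i j \subset mu (m k) i j /\
      nu (m k.+1) j i \subset nu (m k) j i)
   (* ... hence the supports are eventually constant *)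
   /\ exists K : nat, (0 < K)%N /\ forall (k : nat), (K <= k)%N ->
      forall (i : V) (j : J), i \in alpha j ->
        mu (m k) i j = mu (m K) i j /\ nu (m k) j i = nu (m K) j i)
  /\
  (* (2) the support of each marginal is contained in all messages *)
  (forall (k : nat) (i : V) (j : J), (0 < k)%N -> i \in alpha j ->
      marg_support phi i \subset mu (m k) i j /\
      marg_support phi i \subset nu (m k) j i).
Proof.
move=> m.
have decr : forall k, (0 < k)%N ->
    (forall i j, mu (m k.+1) i j \subset mu (m k) i j) /\
    (forall j i, nu (m k.+1) j i \subset nu (m k) j i).
  elim=> [//|k IH] _; case: k IH => [|k] IH.
    by split => *; apply: subsetT.
  case: (IH isT) => H1 H2; exact: (step_mono alpha phi H1 H2).
have stab : forall n k, (0 < k)%N -> (pot (m k) <= n)%N -> exists K, (k <= K)%N /\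
    (forall i j, mu (m K.+1) i j = mu (m K) i j) /\
    (forall j i, nu (m K.+1) j i = nu (m K) j i).
  elim=> [|n IH] k k0 Hp; case: (decr k k0) => H1 H2;
    have := pot_leqif H1 H2; case=> Hle Heq;
    (case E: ([forall i, forall j, mu (m k.+1) i j == mu (m k) i j] &&
          [forall j, forall i, nu (m k.+1) j i == nu (m k) j i]);
    [ move/andP: E => [/forallP E1 /forallP E2]; exists k; split => //; split;
      [move=> i j; exact/eqP/(forallP (E1 i) j) | move=> j i; exact/eqP/(forallP (E2 j) i)]
    | ]).
  - have : (pot (m k.+1) < pot (m k))%N by rewrite ltn_neqAle Heq E Hle.
    by move: Hp; rewrite leqn0 => /eqP ->.
  - have Hlt : (pot (m k.+1) < pot (m k))%N by rewrite ltn_neqAle Heq E Hle.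
    have [K [HK HK2]] := IH k.+1 isT (leq_trans (leq_trans Hlt Hp) (leqnn _)).
    by exists K; split => //; apply: ltnW.
have [K [K1 [HK1 HK2]]] := stab _ 1%N isT (leqnn _).
split; first split.
- move=> k i j k0 _; case: (decr k k0) => H1 H2; split; [exact: H1|exact: H2].
- exists K; split; first by [].
  suff H : forall d, (forall i j, mu (m (K + d)%N) i j = mu (m K) i j) /\
                      (forall j i, nu (m (K + d)%N) j i = nu (m K) j i).
    move=> k Hk i j _; have [H1 H2] := H (k - K)%N.
    by rewrite (subnKC Hk) in H1 H2; split; [apply: H1|apply: H2].
  case: K K1 HK1 HK2 => [//|K] _ HK1 HK2.
  have es : forall (T : finType) (a b : {set T}), a = b -> a \subset b by move=> ? ? ? ->.
  elim=> [|d [IH1 IH2]]; first by rewrite addn0.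
  have s1 := step_mono alpha phi (fun i j => es _ _ _ (IH1 i j)) (fun j i => es _ _ _ (IH2 j i)).
  have s2 := step_mono alpha phi (fun i j => es _ _ _ (esym (IH1 i j)))
                                  (fun j i => es _ _ _ (esym (IH2 j i))).
  case: s1 s2 => [a1 a2] [b1 b2].
  rewrite addnS; split.
  + move=> i j; rewrite -HK1; apply/eqP; rewrite eqEsubset; apply/andP; split;
      [exact: (a1 i j) | exact: (b1 i j)].
  + move=> j i; rewrite -HK2; apply/eqP; rewrite eqEsubset; apply/andP; split;
      [exact: (a2 j i) | exact: (b2 j i)].
- suff H : forall k, (0 < k)%N -> forall i j,
      marg_support phi i \subset mu (m k) i j /\ marg_support phi i \subset nu (m k) j i.
    by move=> k i j k0 _; exact: H.
  elim=> [//|k IH] _; case: k IH => [|k] IH.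
    by move=> i j; split; apply: subsetT.
  move=> i j; split.
  + apply/bigcapsP => j' _; exact: (proj2 (IH isT i j')).
  + apply/subsetP => x /marg_ex [y [Hy Hg]].
    rewrite inE; apply/existsP; exists y; rewrite Hy eqxx /=.
    have -> : phi j y != 0.
      by apply: contra Hg => H0; rewrite /glob; apply/prodf_eq0; exists j.
    rewrite andbT.
    apply/forallP => i'; apply/implyP => _.
    exact: (subsetP (proj1 (IH isT i' j))) _ (glob_supp phi_nonneg i' Hg).
Qed.
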